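(* For every code $u\in\mathrm{PR}_X$ and every $x\in X_\bot$, writing $e(u,x) = (e_{\mathrm{map}}(u,x), e_{\mathrm{arg}}(u,x))$: (1) if $c(u) > 0$ then $c(e_{\mathrm{map}}(u,x)) < c(u)$ in $\mathbb{N}[\omega]$; (2) $c(u) = 0$ if and only if $u = \mathrm{id}$, and in that case $e(u,x) = (u,x)$.
   Context: Universe: $X$ is the smallest set containing the numerals $\nu(n)$ ($n\in\mathbb{N}$) and closed under forming pairs $\langle x;y\rangle$ ($x,y\in X$); $X_\bot = X\cup\{\bot\}$. Codes $\mathrm{PR}_X$: the formal terms generated from the basic symbols $\mathrm{bas}=\{\mathrm{id},\mathring 0,\mathring{\mathrm s},\mathring\Pi,\mathring\Delta,\mathring\ell,\mathring{\mathrm r}\}$ by internal composition $\langle v\odot u\rangle$, internal induced $\langle u;v\rangle$, internal product $\langle u\# v\rangle$ and internal iteration $u^{\$}$. Basic symbols act on $X_\bot$: $\mathrm{id}(x)=x$; $\mathring 0(x)=\nu(0)$; $\mathring{\mathrm s}(\nu(n))=\nu(n+1)$; $\mathring\Pi(x)=\nu(0)$; $\mathring\Delta(x)=\langle x;x\rangle$; $\mathring\ell\langle x;y\rangle = x$, $\mathring{\mathrm r}\langle x;y\rangle = y$; in all other cases (and on $\bot$, except for $\mathrm{id}$) the value is $\bot$. Code expansion: $u^{[0]}=\mathrm{id}$, $u^{[n+1]}=\langle u\odot u^{[n]}\rangle$. Evaluation step $e:\mathrm{PR}_X\times X_\bot\to\mathrm{PR}_X\times X_\bot$, defined by recursion on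 the term structure, taking the first applicable case: (a) $u=\mathrm{ba}\in\mathrm{bas}$: $e(\mathrm{ba},x)=(\mathrm{id},\mathrm{ba}(x))$; (b) $e(\langle v\odot\mathrm{ba}\rangle,x) = (v,\mathrm{ba}(x))$ for $\mathrm{ba}\in\mathrm{bas}$; (c) for $u\notin\mathrm{bas}$: $e(\langle v\odot u\rangle,x) = (\langle v\odot e_{\mathrm{map}}(u,x)\rangle, e_{\mathrm{arg}}(u,x))$; (d) $e(\langle\mathrm{id}\#\mathrm{id}\rangle,\langle y;z\rangle) = (\mathrm{id},\langle y;z\rangle)$; (e) otherwise $e(\langle u\# v\rangle,\langle y;z\rangle) = (\langle e_{\mathrm{map}}(u,y)\# e_{\mathrm{map}}(v,z)\rangle,\langle e_{\mathrm{arg}}(u,y);e_{\mathrm{arg}}(v,z)\rangle)$; (f) $e(\langle\mathrm{id};\mathrm{id}\rangle,z) = (\mathrm{id},\langle z;z\rangle)$ for $z\in X$; (g) otherwise $e(\langle u;v\rangle,z) = (\langle e_{\mathrm{map}}(u,z);e_{\mathrm{map}}(v,z)\rangle,\langle e_{\mathrm{arg}}(u,z);e_{\mathrm{arg}}(v,z)\rangle)$ for $z\in X$; (h) $e(u^{\$},\langle y;\nu(n)\rangle) = (u^{[n]},y)$; (i) in all remaining cases $e(u,x)=(\mathrm{id},\bot)$. Complexity $c:\mathrm{PR}_X\to\mathbb{N}[\omega]$ (polynomials in $\omega$ with natural-number coefficients): $c(\mathrm{id})=0$; $c(\mathrm{ba})=1$ for the other basic symbols; $c\langle v\odot u\rangle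 = c\langle u\#v\rangle = c\langle u;v\rangle = c(u)+c(v)+1$; $c(u^{\$}) = (c(u)+1)\cdot\omega$. $\mathbb{N}[\omega]$ is ordered lexicographically with priority to higher powers: $p<q$ iff $p\ne q$ and at the highest power of $\omega$ where their coefficients differ, the coefficient of $p$ is smaller. *)

(* Defs.v *)
From Stdlib Require Import List Arith Bool.
Import ListNotations.
Open Scope bool_scope.

Inductive X : Type :=
| num : nat -> X
| pair : X -> X -> X.

(* X_bot = option X, with None = bottom. *)
Definition Xb := option X.

Inductive code : Type :=
| Id | Zero | Succ | Pi | Delta | Left | Right
| Comp : code -> code -> code     (* Comp v u = <v (.) u> *)
| Ind  : code -> code -> code
| Prod : code -> code -> code
| It   : code -> code.

Definition is_basic (u : code) : bool :=
  match u with
  | Id | Zero | Succ | Pi | Delta | Left | Right => true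
  | _ => false
  end.

(* Action of basic symbols on X_bot (non-basic codes: bottom, never used). *)
Definition bas_apply (b : code) (x : Xb) : Xb :=
  match b, x with
  | Id, _ => x
  | Zero, Some _ => Some (num 0)
  | Succ, Some (num n) => Some (num (S n))
  | Pi, Some _ => Some (num 0)
  | Delta, Some y => Some (pair y y)
  | Left, Some (pair y _) => Some y
  | Right, Some (pair _ z) => Some z
  | _, _ => None
  end.

Fixpoint expand (u : code) (n : nat) : code :=
  match n with
  | 0 => Id
  | S m => Comp u (expand u m)
  end.

Definition is_Id (u : code) : bool := match u with Id => true | _ => false end.

Definition pairb (a b : Xb) : Xb :=
  match a, b with
  | Some y, Some z => Some (pair y z)
  | _, _ => None
  end.

Fixpoint e (u : code) (x : Xb) {struct u} : code * Xb :=
  match u with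
  | Id | Zero | Succ | Pi | Delta | Left | Right => (Id, bas_apply u x)
  | Comp v w =>
      if is_basic w then (v, bas_apply w x)
      else (Comp v (fst (e w x)), snd (e w x))
  | Prod u1 v1 =>
      match x with
      | Some (pair y z) =>
          if is_Id u1 && is_Id v1 then (Id, x)
          else (Prod (fst (e u1 (Some y))) (fst (e v1 (Some z))),
                pairb (snd (e u1 (Some y))) (snd (e v1 (Some z))))
      | _ => (Id, None)
      end
  | Ind u1 v1 =>
      match x with
      | Some z =>
          if is_Id u1 && is_Id v1 then (Id, Some (pair z z))
          else (Ind (fst (e u1 x)) (fst (e v1 x)),
                pairb (snd (e u1 x)) (snd (e v1 x)))
      | None => (Id, None)
      end
  | It w =>
      match x with
      | Some (pair y (num n)) => (expand w n, Some y)
      | _ => (Id, None)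
      end
  end.

Definition emap (u : code) (x : Xb) : code := fst (e u x).
Definition earg (u : code) (x : Xb) : Xb := snd (e u x).

(* N[omega]: polynomials with natural coefficients, represented by the list
   of coefficients [a0; a1; ...] (coefficient of omega^i at index i);
   trailing zeros are irrelevant since everything is stated via coef. *)
Definition poly := list nat.
Definition coef (p : poly) (i : nat) : nat := nth i p 0.

Fixpoint padd (p q : poly) : poly :=
  match p, q with
  | [], _ => q
  | _, [] => p
  | a :: p', b :: q' => (a + b) :: padd p' q'
  end.

Definition pconst (n : nat) : poly := [n].
Definition pmulw (p : poly) : poly := 0 :: p.

Definition peq (p q : poly) : Prop := forall i, coef p i = coef q i.

Definition plt (p q : poly) : Prop :=
  exists k, coef p k < coef q k /\ (forall j, k < j -> coef p j = coef q j).

Fixpoint c (u : code) : poly :=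
  match u with
  | Id => pconst 0
  | Zero | Succ | Pi | Delta | Left | Right => pconst 1
  | Comp v w => padd (padd (c w) (c v)) (pconst 1)
  | Ind u1 v1 => padd (padd (c u1) (c v1)) (pconst 1)
  | Prod u1 v1 => padd (padd (c u1) (c v1)) (pconst 1)
  | It w => pmulw (padd (c w) (pconst 1))
  end.

(* Main.v *)
Require Import Defs.
From Stdlib Require Import List Arith Lia.
Import ListNotations.

Lemma coef_padd p q i : coef (padd p q) i = coef p i + coef q i.
Proof.
  revert q i; induction p as [|a p IH]; intros [|b q] [|i]; unfold coef in *; simpl; auto.
Qed.

Lemma coef_nil i : coef [] i = 0.
Proof. destruct i; reflexivity. Qed.

Lemma coef_const n i : coef (pconst n) i = match i with 0 => n | _ => 0 end.
Proof. destruct i as [|[|i]]; reflexivity. Qed.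

Lemma coef_mulw p i : coef (pmulw p) i = match i with 0 => 0 | S j => coef p j end.
Proof. destruct i; reflexivity. Qed.

Lemma coef_overflow p j : length p <= j -> coef p j = 0.
Proof. intros; unfold coef; apply nth_overflow; auto. Qed.

Lemma top_aux (f : nat -> nat) N :
  (forall j, N <= j -> f j = 0) -> (exists i, f i <> 0) ->
  exists d, f d <> 0 /\ forall j, d < j -> f j = 0.
Proof.
  revert f; induction N; intros f H [i Hi].
  - exfalso; apply Hi, H; lia.
  - destruct (Nat.eq_dec (f N) 0) as [E|E].
    + apply IHN; [|eauto]. intros j Hj. destruct (Nat.eq_dec j N); subst; auto; apply H; lia.
    + exists N; split; [auto|]. intros; apply H; lia.
Qed.

Lemma top (p : poly) : (exists i, coef p i <> 0) ->
  exists d, coef p d <> 0 /\ forall j, d < j -> coef p j = 0.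
Proof. apply top_aux with (N := length p). intros; apply coef_overflow; auto. Qed.

Definition ple p q := peq p q \/ plt p q.

Lemma plt_add p q p' q' : plt p q -> ple p' q' -> plt (padd p p') (padd q q').
Proof.
  intros [k1 [H1 H1']] [E|[k2 [H2 H2']]].
  - exists k1. rewrite !coef_padd, (E k1). split; [lia|].
    intros j Hj; rewrite !coef_padd, H1', E; auto.
  - destruct (Nat.lt_total k1 k2) as [L|[L|L]].
    + exists k2. rewrite !coef_padd, (H1' k2 L). split; [lia|].
      intros j Hj; rewrite !coef_padd, H1', H2'; auto; lia.
    + subst. exists k2. rewrite !coef_padd. split; [lia|].
      intros j Hj; rewrite !coef_padd, H1', H2'; auto.
    + exists k1. rewrite !coef_padd, (H2' k1 L). split; [lia|].
      intros j Hj; rewrite !coef_padd, H1', H2'; auto; lia.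
Qed.

Lemma ple_refl p : ple p p.
Proof. left; intro; reflexivity. Qed.

Lemma plt_add_r p q r : plt p q -> plt (padd p r) (padd q r).
Proof. intros; apply plt_add; auto using ple_refl. Qed.

Lemma plt_add_l p q r : plt p q -> plt (padd r p) (padd r q).
Proof.
  intros [k [H H']]. exists k. rewrite !coef_padd. split; [lia|].
  intros; rewrite !coef_padd, H'; auto.
Qed.

Lemma nonzero_c u : u <> Id -> exists i, coef (c u) i <> 0.
Proof.
  destruct u; intros Hu; try congruence;
  try (exists 0; simpl; rewrite ?coef_padd, ?coef_const; cbn; lia).
  exists 1. simpl. rewrite coef_mulw, coef_padd. cbn. lia.
Qed.

Lemma plt0 p : (exists i, coef p i <> 0) -> plt (pconst 0) p.
Proof.
  intros H. destruct (top p H) as [d [Hd Hd']]. exists d.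
  rewrite coef_const. split. destruct d; lia.
  intros j Hj; rewrite coef_const, Hd'; auto; destruct j; auto.
Qed.

Lemma c_expand w n i : coef (c (expand w n)) i = n * coef (padd (c w) (pconst 1)) i.
Proof.
  induction n; simpl.
  - rewrite coef_const; destruct i; auto.
  - rewrite !coef_padd in *. rewrite IHn. lia.
Qed.

Lemma basic_const w : is_basic w = true -> forall i, 0 < i -> coef (c w) i = 0.
Proof. destruct w; try discriminate; intros _ i Hi; simpl; rewrite coef_const; destruct i; lia. Qed.

Lemma Id_c : c Id = pconst 0.
Proof. reflexivity. Qed.

Lemma pair_case a b ea eb :
  (a <> Id -> plt (c ea) (c a)) -> (b <> Id -> plt (c eb) (c b)) ->
  (a = Id -> ea = Id) -> (b = Id -> eb = Id) ->
  is_Id a && is_Id b = false ->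
  plt (padd (padd (c ea) (c eb)) (pconst 1)) (padd (padd (c a) (c b)) (pconst 1)).
Proof.
  intros Ha Hb Ea Eb B. apply plt_add_r.
  destruct (is_Id a) eqn:A.
  - destruct a; try discriminate. rewrite Ea by auto. apply plt_add_l, Hb. destruct b; discriminate.
  - apply plt_add. apply Ha; destruct a; discriminate.
    destruct (is_Id b) eqn:Bb.
    + destruct b; try discriminate. rewrite Eb by auto. apply ple_refl.
    + right; apply Hb; destruct b; discriminate.
Qed.

Lemma emap_Id x : emap Id x = Id.
Proof. reflexivity. Qed.

Ltac fb := apply plt0; solve [exists 0; rewrite ?coef_padd, ?coef_mulw, ?coef_const, ?coef_padd, ?coef_const; cbn; lia
  | exists 1; rewrite ?coef_padd, ?coef_mulw, ?coef_const, ?coef_padd, ?coef_const; cbn; lia].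

Lemma dec u x : u <> Id -> plt (c (emap u x)) (c u).
Proof.
  revert x; induction u; intros x Hu; try congruence;
  try (fb).
  - unfold emap; simpl. destruct (is_basic u2) eqn:B; simpl.
    + exists 0. rewrite !coef_padd, coef_const. split; [lia|].
      intros j Hj; rewrite !coef_padd, coef_const, (basic_const u2 B j) by lia. destruct j; lia.
    + apply plt_add_r, plt_add_r. apply IHu2. destruct u2; discriminate.
  - unfold emap; simpl. destruct x as [z|]; [|fb].
    destruct (is_Id u1 && is_Id u2) eqn:B; [fb|]. simpl.
    apply pair_case; [apply IHu1|apply IHu2|intros; subst; reflexivity..|exact B].
  - unfold emap; simpl. destruct x as [[n|y z]|]; try (fb).
    destruct (is_Id u1 && is_Id u2) eqn:B; [fb|]. simpl.
    apply pair_case; [apply IHu1|apply IHu2|intros; subst; reflexivity..|exact B].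
  - unfold emap; simpl. destruct x as [[n|y [n|a b]]|]; try (fb).
    simpl. set (q := padd (c u) (pconst 1)).
    assert (Q : exists i, coef q i <> 0) by (exists 0; unfold q; rewrite coef_padd, coef_const; lia).
    destruct (top q Q) as [d [Hd Hd']]. exists (S d).
    rewrite c_expand, coef_mulw. fold q. rewrite (Hd' (S d)) by lia. split; [lia|].
    intros j Hj. rewrite c_expand, coef_mulw. fold q. rewrite Hd' by lia. destruct j; [lia|]. rewrite Hd' by lia. lia.
Qed.

Lemma code_eq_Id u : u = Id \/ u <> Id.
Proof. destruct u; auto; right; discriminate. Qed.

Theorem mainTheorem9 (u : code) (x : Xb) :
  (plt (pconst 0) (c u) -> plt (c (emap u x)) (c u)) /\
  ((peq (c u) (pconst 0) <-> u = Id) /\ (u = Id -> e u x = (u, x))).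
Proof.
  split; [|split; [split|]].
  - intros H. apply dec. intros ->. destruct H as [k [H _]]. simpl in H. lia.
  - intros H. destruct (code_eq_Id u) as [->|Hu]; auto. exfalso.
    destruct (nonzero_c u Hu) as [i Hi]; rewrite (H i), coef_const in Hi; destruct i; lia.
  - intros ->; intro; reflexivity.
  - intros ->; reflexivity.
Qed.
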